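(* There is an SOS refutation of $Q_n$ of degree $2$ and monomial-size polynomial in $n$.
   Context: For $i\in[n]$, $j\in[2n]$ there are twin variable pairs $x_{ij},\bar x_{ij}$; $\mathrm{ks}_i=\sum_{j\in[2n]}x_{ij}-n$. $Q_n$ consists of: $\mathrm{ks}_1-1/2=0$; $\mathrm{ks}_i^2-\mathrm{ks}_{i+1}=0$ for $i\in[n-1]$; $\mathrm{ks}_n^2=0$. An SOS refutation of $Q$ is an identity $-1=\sum_i r_i^2+\sum_{q\in Q}t_q q+\sum(u(x^2-x)+v(x+\bar x-1))$ over twin pairs, with real polynomials; its degree is the maximum degree of the terms $r_i^2$, $t_q q$, $u(x^2-x)$, $v(x+\bar x-1)$; its monomial-size is the number of explicit monomials counted with multiplicity, where explicit monomials are all monomials appearing in the $r_i$, $t_q$, $q$, $u$, $v$, and the logical axioms. *)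

(* Defs.v *)
From HB Require Import structures.
From mathcomp Require Import all_boot all_order all_algebra.
From mathcomp Require Import mpoly.
From mathcomp Require Import Rstruct.
From Stdlib Require Rdefinitions.

Set Implicit Arguments.
Unset Strict Implicit.
Unset Printing Implicit Defensive.
Import Order.TTheory GRing.Theory Num.Theory.
Local Open Scope ring_scope.

(* Variables of Q_n: for i in [n], j in [2n], b = false gives x_ij, b = true gives
   its twin xbar_ij.  (Indices are 0-based: i : 'I_n, j : 'I_(2n).) *)
Definition var (n : nat) : finType := ('I_n * 'I_(n.*2) * bool)%type.
Definition nvars (n : nat) : nat := #|var n|.
Notation poly n := {mpoly Rdefinitions.R[nvars n]}.

Definition X (n : nat) (z : var n) : poly n := 'X_(enum_rank z).

(* x_{i,j} (0-based i); the fallback 0 for i >= n is never used below. *)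
Definition xv (n : nat) (i : nat) (j : 'I_(n.*2)) : poly n :=
  match (insub i : option 'I_n) with
  | Some i' => X (i', j, false)
  | None => 0
  end.

(* ks_{i+1} = sum_{j in [2n]} x_{i+1,j} - n   (0-based index i) *)
Definition ks (n : nat) (i : nat) : poly n := \sum_(j < n.*2) xv i j - n%:R.

(* The equations of Q_n, indexed by k : 'I_(n.+1):
   k = 0          : ks_1 - 1/2
   1 <= k <= n-1  : ks_k^2 - ks_{k+1}
   k = n          : ks_n^2                                   *)
Definition Qn (n : nat) (k : 'I_n.+1) : poly n :=
  if val k == 0%N then ks n 0 - (2%:R)^-1%:MP
  else if ltn (val k) n then ks n k.-1 ^+ 2 - ks n k
  else ks n n.-1 ^+ 2.

(* total degree of a polynomial (0 for the zero polynomial) *)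
Definition totdeg (n : nat) (p : poly n) : nat := (\max_(m <- msupp p) mdeg m)%N.

Definition nmon (n : nat) (p : poly n) : nat := size (msupp p).

Definition bool_ax (n : nat) (z : var n) : poly n := X z ^+ 2 - X z.
Definition twin_ax (n : nat) (p : 'I_n * 'I_(n.*2)) : poly n :=
  X (p.1, p.2, false) + X (p.1, p.2, true) - 1.

Record sos_ref (n : nat) := SosRef {
  rs : seq (poly n);
  tq : 'I_n.+1 -> poly n;
  uz : var n -> poly n;
  vp : 'I_n * 'I_(n.*2) -> poly n
}.

Definition is_refutation (n : nat) (P : sos_ref n) : Prop :=
  - 1 = \sum_(r <- rs P) r ^+ 2
        + \sum_(k : 'I_n.+1) tq P k * Qn k
        + \sum_(z : var n) uz P z * bool_ax z
        + \sum_(p : 'I_n * 'I_(n.*2)) vp P p * twin_ax p.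

Definition sos_degree (n : nat) (P : sos_ref n) : nat :=
  (maxn (\max_(r <- rs P) totdeg (r ^+ 2)%R)
  (maxn (\max_(k : 'I_n.+1) totdeg (tq P k * Qn k)%R)
  (maxn (\max_(z : var n) totdeg (uz P z * bool_ax z)%R)
        (\max_(p : 'I_n * 'I_(n.*2)) totdeg (vp P p * twin_ax p)%R))))%N.

(* monomial-size: monomials of every r_i, and for every axiom actually used
   (nonzero multiplier) the monomials of the multiplier and of the axiom. *)
Definition used (n : nat) (m : poly n) (s : nat) : nat := if m == 0 then 0%N else s.

Definition sos_msize (n : nat) (P : sos_ref n) : nat :=
  (\sum_(r <- rs P) nmon r
   + \sum_(k : 'I_n.+1) used (tq P k) (nmon (tq P k) + nmon (Qn k))
   + \sum_(z : var n) used (uz P z) (nmon (uz P z) + nmon (bool_ax z))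
   + \sum_(p : 'I_n * 'I_(n.*2))
        used (vp P p) (nmon (vp P p) + nmon (twin_ax p)))%N.

(* Main.v *)
Require Import Defs.
From mathcomp Require Import all_boot all_order all_algebra.
From mathcomp Require Import mpoly.
From mathcomp Require Import Rstruct ring lra zify.
From Stdlib Require Rdefinitions.
Set Implicit Arguments.
Unset Strict Implicit.
Unset Printing Implicit Defensive.
Import Order.TTheory GRing.Theory Num.Theory.
Local Open Scope ring_scope.

Local Notation R := Rdefinitions.R.


Section Gen.
Variable n : nat.
Local Notation P := {mpoly Rdefinitions.R[nvars n]}.
Implicit Types p q : P.

Lemma totdegE p : totdeg p = (msize p).-1.
Proof.
rewrite /totdeg msizeE; elim: (msupp p) => [|m s IH]; first by rewrite !big_nil.
rewrite !big_cons IH.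
case: (\max_(m0 <- s) (mdeg m0).+1)%N => [|k] /=; first by rewrite !maxn0.
by rewrite maxnSS.
Qed.

Lemma msizeMle p q : (msize (p * q) <= (msize p + msize q).-1)%N.
Proof.
have [->|nzp] := eqVneq p 0; first by rewrite mul0r msize0.
have [->|nzq] := eqVneq q 0; first by rewrite mulr0 msize0.
by rewrite msizeM.
Qed.

Lemma msizeMn p k : (msize (p *+ k) <= msize p)%N.
Proof.
elim: k => [|k IH]; first by rewrite mulr0n msize0.
rewrite mulrS; apply: leq_trans (msizeD_le _ _) _; by rewrite geq_max leqnn IH.
Qed.

Lemma nmonD p q : (nmon (p + q) <= nmon p + nmon q)%N.
Proof.
rewrite /nmon -size_cat; apply: uniq_leq_size; first exact: msupp_uniq.
exact: msuppD_le.
Qed.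

Lemma nmonN p : nmon (- p) = nmon p.
Proof. by rewrite /nmon (perm_size (msuppN p)). Qed.

Lemma nmonB p q : (nmon (p - q) <= nmon p + nmon q)%N.
Proof. by rewrite -(nmonN q) nmonD. Qed.

Lemma nmonM p q : (nmon (p * q) <= nmon p * nmon q)%N.
Proof.
rewrite /nmon -(size_allpairs (fun m1 m2 => (m1 + m2)%MM)).
apply: uniq_leq_size; first exact: msupp_uniq.
exact: msuppM_le.
Qed.

Lemma nmonC c : (nmon (c%:MP : P) <= 1)%N.
Proof. by rewrite /nmon msuppC; case: (c == 0). Qed.

Lemma nmon0 : nmon (0 : P) = 0%N.
Proof. by rewrite /nmon -(rmorph0 (@mpolyC (nvars n) Rdefinitions.R)) msupp0. Qed.

Lemma nmonX z : nmon (X z : P) = 1%N.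
Proof. by rewrite /nmon /X msuppX. Qed.

Lemma nmon_nat k : (nmon (k%:R : P) <= 1)%N.
Proof. by rewrite -(rmorph_nat (@mpolyC (nvars n) Rdefinitions.R)) nmonC. Qed.

Lemma nmon_sum m (F : 'I_m -> P) :
  (nmon (\sum_(j < m) F j) <= \sum_(j < m) nmon (F j))%N.
Proof.
elim/big_rec2: _ => [|j y1 y2 _ H]; first by rewrite nmon0.
by apply: leq_trans (nmonD _ _) _; rewrite leq_add2l.
Qed.

Lemma nmon_xv i (j : 'I_(n.*2)) : (nmon (xv i j) <= 1)%N.
Proof. rewrite /xv; case: insub => [i'|]; by rewrite ?nmonX ?nmon0. Qed.

Lemma nmon_ks i : (nmon (ks n i) <= n.*2.+1)%N.
Proof.
rewrite /ks; apply: leq_trans (nmonB _ _) _.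
rewrite -addn1 leq_add ?nmon_nat //.
apply: leq_trans (nmon_sum _) _.
apply: (@leq_trans (\sum_(j < n.*2) 1)%N).
  by apply: leq_sum => j _; apply: nmon_xv.
by rewrite sum_nat_const card_ord muln1.
Qed.

Lemma msize_xv i (j : 'I_(n.*2)) : (msize (xv i j) <= 2)%N.
Proof. rewrite /xv; case: insub => [i'|]; by rewrite ?msize0 // /X msizeX mdeg1. Qed.

Lemma msize_ks i : (msize (ks n i) <= 2)%N.
Proof.
rewrite /ks; apply: leq_trans (msizeD_le _ _) _; rewrite geq_max msizeN.
apply/andP; split.
  apply: leq_trans (msize_sum _ _ _) _; apply/bigmax_leqP => j _; exact: msize_xv.
by rewrite -(rmorph_nat (@mpolyC (nvars n) Rdefinitions.R)) msizeC; case: (_ != 0).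
Qed.

End Gen.


Section Low.
Variable n : nat.
Local Notation P := {mpoly Rdefinitions.R[nvars n]}.

Lemma xv_in i (Hi : (i < n)%N) (j : 'I_(n.*2)) : xv i j = X (Ordinal Hi, j, false).
Proof. by rewrite /xv insubT. Qed.

Lemma ks_coef i (Hi : (i < n)%N) (j0 : 'I_(n.*2)) :
  (ks n i)@_(U_(enum_rank ((Ordinal Hi, j0, false) : var n)))%MM = 1.
Proof.
rewrite /ks mcoeffB raddf_sum.
rewrite -(rmorph_nat (@mpolyC (nvars n) Rdefinitions.R)) mcoeffC.
have -> : (U_(enum_rank ((Ordinal Hi, j0, false) : var n)) == 0)%MM = false.
  by apply/negbTE; rewrite -mdeg_eq0 mdeg1.
rewrite mulr0 subr0 (bigD1 j0) //= big1 ?addr0.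
  by rewrite xv_in /X mcoeffXU eqxx.
move=> j Hj; rewrite xv_in /X mcoeffXU (inj_eq enum_rank_inj).
by rewrite !xpair_eqE eqxx andbT /= (negbTE Hj).
Qed.

Lemma msize_ks_ge i (Hi : (i < n)%N) : (2 <= msize (ks n i))%N.
Proof.
have j0 : 'I_(n.*2) by exists 0%N; rewrite double_gt0 (leq_ltn_trans _ Hi).
have := ks_coef Hi j0.
set m := (U_(_))%MM => H.
have Hm : m \in msupp (ks n i) by rewrite -[_ \in _]negbK -mcoeff_eq0 H oner_eq0.
by have := msize_mdeg_lt Hm; rewrite mdeg1.
Qed.
End Low.


Section Tel.
Variable S : comRingType.
Variables (y W A : nat -> S).
Hypothesis HW : forall i, W i = 2 * W i.+1 * A i.+1.

Definition ff i := W i * (y i - A i) ^+ 2 - W i * (y i ^+ 2 - y i.+1).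

Lemma telG k : \sum_(0 <= i < k.+1) ff i
  = - (2 * W 0 * A 0 * y 0) + \sum_(0 <= i < k.+1) W i * A i ^+ 2 + W k * y k.+1.
Proof.
elim: k => [|k IH].
  rewrite !big_nat1 /ff; ring.
rewrite big_nat_recr //= IH [in RHS]big_nat_recr //= /ff.
have -> : W k * y k.+1 = 2 * W k.+1 * A k.+1 * y k.+1 by rewrite {1}HW.
ring.
Qed.

Lemma telesc m (h M : S) :
 2 * W 0 * A 0 = M ->
 M * h = \sum_(0 <= i < m.+1) W i * A i ^+ 2 + 1 ->
 -1 = \sum_(0 <= i < m.+1) W i * (y i - A i) ^+ 2
      + (M * (y 0 - h) + \sum_(0 <= i < m.+1) (- W i) *
            (y i ^+ 2 - (if (i.+1 < m.+1)%N then y i.+1 else 0))).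
Proof.
move=> HM Hh.
have E : \sum_(0 <= i < m.+1) W i * (y i - A i) ^+ 2
      + \sum_(0 <= i < m.+1) (- W i) *
            (y i ^+ 2 - (if (i.+1 < m.+1)%N then y i.+1 else 0))
   = \sum_(0 <= i < m.+1) ff i - W m * y m.+1.
  rewrite -big_split /= big_nat_recr //= [in RHS]big_nat_recr //= ltnn.
  rewrite [X in X + _ = _](_ : _ = \sum_(0 <= i < m) ff i); last first.
    apply: eq_big_nat => i /andP [_ Hi]; rewrite ltnS Hi /ff; ring.
  rewrite /ff; ring.
rewrite addrCA E telG HM.
have -> : M * (y 0 - h) = M * y 0 - M * h by ring.
rewrite Hh; ring.
Qed.
End Tel.




Fixpoint aa (i : nat) : R := if i is i'.+1 then aa i' ^+ 2 else 2%:R^-1.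
Fixpoint cc (i : nat) : R := if i is i'.+1 then cc i' / (2%:R * aa i) else 1.

Lemma aa_gt0 i : 0 < aa i.
Proof. elim: i => [|i IH] /=; [by rewrite invr_gt0 ltr0n | exact: exprn_gt0]. Qed.

Lemma cc_gt0 i : 0 < cc i.
Proof.
elim: i => [|i IH] /=; first exact: ltr01.
apply: divr_gt0 => //; apply: mulr_gt0; [by rewrite ltr0n | exact: (aa_gt0 i.+1)].
Qed.

Lemma cc_rec i : cc i = 2%:R * cc i.+1 * aa i.+1.
Proof.
have H := aa_gt0 i.
rewrite /=; field.
by rewrite ?mulf_neq0 ?expf_neq0 ?pnatr_eq0 ?lt0r_neq0.
Qed.

Lemma cc_a2 i : cc i * aa i ^+ 2 = (2%:R^-1) ^+ i.+2.
Proof.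
elim: i => [|i IH]; first by rewrite /= mul1r.
rewrite [RHS]exprS -IH /=.
have H' : aa i != 0 by rewrite lt0r_neq0 // aa_gt0.
field; by rewrite ?mulf_neq0 ?expf_neq0 ?pnatr_eq0.
Qed.

Lemma sum_half m : \sum_(0 <= i < m) (2%:R^-1 : R) ^+ i.+2 = 2%:R^-1 - (2%:R^-1) ^+ m.+1.
Proof.
elim: m => [|m IH]; first by rewrite big_nil expr1 subrr.
rewrite big_nat_recr //= IH !exprS; by field.
Qed.

Lemma half_pow m : (2%:R ^+ m : R) * (2%:R^-1) ^+ m = 1.
Proof. by rewrite -exprMn mulfV ?expr1n ?pnatr_eq0. Qed.




Section Main.
Variable m : nat.
Local Notation n := m.+1.
Local Notation P := {mpoly R[nvars n]}.

Definition Mr : R := 2%:R ^+ n.+1.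
Definition ww i : R := cc i * Mr.
Definition ss i : R := Num.sqrt (ww i).
Definition rr i : P := (ss i)%:MP * (ks n i - (aa i)%:MP).
Definition tqq (k : 'I_n.+1) : P := if val k == 0%N then Mr%:MP else - (ww k.-1)%:MP.
Definition PP : sos_ref n := SosRef [seq rr i | i <- iota 0 n] tqq (fun _ => 0) (fun _ => 0).

Lemma Mr_gt0 : 0 < Mr.
Proof. by rewrite /Mr exprn_gt0 // ltr0n. Qed.

Lemma ww_gt0 i : 0 < ww i.
Proof. by rewrite /ww mulr_gt0 ?cc_gt0 ?Mr_gt0. Qed.

Lemma rr2 i : rr i ^+ 2 = (ww i)%:MP * (ks n i - (aa i)%:MP) ^+ 2.
Proof.
rewrite /rr exprMn -rmorphXn /ss sqr_sqrtr //; exact: ltW (ww_gt0 i).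
Qed.

Lemma Qn_lift (i : 'I_n) : tqq (lift ord0 i) * Qn (lift ord0 i)
  = - (ww i)%:MP * (ks n i ^+ 2 - (if (i.+1 < n)%N then ks n i.+1 else 0)).
Proof.
rewrite /tqq /Qn /= /bump /= add1n /=.
case: ltnP => H; first by rewrite add0n.
have -> : ks n m = ks n i by congr (ks _ _); have := ltn_ord i; lia.
by rewrite subr0 add0n.
Qed.

Lemma refut : is_refutation PP.
Proof.
change (-1 = \sum_(r <- [seq rr i | i <- iota 0 n]) r ^+ 2
  + \sum_(k < n.+1) tqq k * Qn k + \sum_(z : var n) (0 : P) * bool_ax z
  + \sum_(p : 'I_n * 'I_(n.*2)) (0 : P) * twin_ax p).
rewrite [X in _ + X]big1 ?addr0; last by move=> *; rewrite mul0r.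
rewrite [X in _ + X]big1 ?addr0; last by move=> *; rewrite mul0r.
rewrite big_map (_ : iota 0 n = index_iota 0 n) ?subn0 //.
rewrite (eq_bigr (fun i => (ww i)%:MP * (ks n i - (aa i)%:MP) ^+ 2)); last by move=> i _; rewrite rr2.
rewrite big_ord_recl (eq_bigr _ (fun i _ => Qn_lift i)).
rewrite -(big_mkord xpredT (fun i => - (ww i)%:MP * (ks n i ^+ 2 - (if (i.+1 < n)%N then ks n i.+1 else 0)))).
rewrite /tqq /Qn /=.
apply: (@telesc _ (ks n) (fun i => (ww i)%:MP) (fun i => (aa i)%:MP)).
- move=> i; rewrite -(rmorph_nat (@mpolyC (nvars n) R)) -!rmorphM /=.
  by congr (_%:MP); rewrite /ww {1}(cc_rec i) /=; ring.
- rewrite -(rmorph_nat (@mpolyC (nvars n) R)) -!rmorphM /=.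
  by congr (_%:MP); rewrite /ww /= mul1r mulrAC mulfV ?mul1r // pnatr_eq0.
- rewrite (eq_bigr (fun i => (ww i * aa i ^+ 2)%:MP_[nvars n])); last by move=> i _; rewrite -rmorphXn -rmorphM.
  rewrite -rmorphM -rmorph_sum -(rmorph1 (@mpolyC (nvars n) R)) -rmorphD /=.
  congr (_%:MP).
  rewrite (eq_bigr (fun i => (cc i * aa i ^+ 2) * Mr)); last by move=> i _; rewrite /ww; ring.
  rewrite -big_distrl /= (eq_bigr (fun i => (2%:R^-1 : R) ^+ i.+2)); last by move=> i _; rewrite cc_a2.
  rewrite sum_half /Mr mulrBl [X in _ = _ - X + _]mulrC half_pow; ring.
Qed.

Lemma msizeC_le (c : R) : (msize (c%:MP : P) <= 1)%N.
Proof. by rewrite msizeC; case: (_ != 0). Qed.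

Lemma msizeMle2 (p q : P) a b : (msize p <= a)%N -> (msize q <= b)%N ->
  (msize (p * q) <= (a + b).-1)%N.
Proof.
move=> Hp Hq; apply: leq_trans (msizeMle p q) _.
rewrite -!subn1 leq_sub2r // leq_add //.
Qed.

Lemma msize_ksC i (c : R) : (msize (ks n i - c%:MP) <= 2)%N.
Proof.
apply: leq_trans (msizeD_le _ _) _; rewrite geq_max msizeN msize_ks.
by apply: leq_trans (msizeC_le c) _.
Qed.

Lemma msize_tq k : (msize (tqq k) <= 1)%N.
Proof. rewrite /tqq; case: ifP => _; by rewrite ?msizeN msizeC_le. Qed.

Lemma msize_Qn k : (msize (Qn k : P) <= 3)%N.
Proof.
rewrite /Qn; case: ifP => _.
  by apply: leq_trans (msize_ksC _ _) _.
have H i : (msize (ks n i ^+ 2) <= 3)%N.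
  by rewrite expr2; apply: (msizeMle2 (a:=2) (b:=2)); apply: msize_ks.
case: ifP => _ //.
apply: leq_trans (msizeD_le _ _) _; rewrite geq_max msizeN H /=.
  by apply: leq_trans (msize_ks _ _) _.
Qed.

Lemma totdeg0 : totdeg (0 : P) = 0%N.
Proof. by rewrite totdegE msize0. Qed.

Lemma degree : sos_degree PP = 2%N.
Proof.
rewrite /sos_degree /PP /=.
have HC : (\max_(z : var n) totdeg ((0:P) * bool_ax z) = 0)%N.
  by apply: big1 => z _; rewrite mul0r totdeg0.
have HD : (\max_(z : 'I_n * 'I_(n.*2)) totdeg ((0:P) * twin_ax z) = 0)%N.
  by apply: big1 => z _; rewrite mul0r totdeg0.
rewrite HC HD !maxn0.
apply/eqP; rewrite eqn_leq geq_max; apply/andP; split; first (apply/andP; split).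
- apply/bigmax_leqP_seq => r Hr _.
  have : r \in [seq rr i | i <- iota 0 n] := Hr.
  case/mapP => i _ ->.
  have H1 : (msize (rr i) <= 2)%N.
    exact: (msizeMle2 (a:=1) (b:=2)) (msizeC_le _) (msize_ksC _ _).
  have := msizeMle2 H1 H1; rewrite totdegE expr2; lia.
- apply/bigmax_leqP => k _.
  have := msizeMle2 (msize_tq k) (msize_Qn k); rewrite totdegE; lia.
- apply: leq_trans (leq_maxr _ _).
  have Hb := @leq_bigmax _ (fun k : 'I_m.+2 => totdeg (tqq k * Qn k)) ord_max.
  apply: leq_trans Hb.
  rewrite totdegE /tqq /Qn /= ltnn.
  have Hk := msize_ks_ge (ltnSn m) : (2 <= msize (ks n m))%N.
  have nz : ks n m != 0 by rewrite -msize_poly_eq0 -lt0n (leq_trans _ Hk).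
  have nzw : - (ww m)%:MP != 0 :> P.
    by rewrite oppr_eq0 mpolyC_eq0 lt0r_neq0 // ww_gt0.
  have Ha : (0 < msize (- (ww m)%:MP : P))%N by rewrite lt0n msize_poly_eq0.
  rewrite expr2 !msizeM ?mulf_neq0 //.
  rewrite -!subn1; move: Ha Hk; set a := mmeasure _ (- _); set b := mmeasure _ (ks n m); lia.
Qed.

Lemma nmon_ksC i (c : R) : (nmon (ks n i - c%:MP : P) <= n.*2.+2)%N.
Proof.
apply: leq_trans (nmonB _ _) _; have := nmon_ks n i; have := @nmonC n c; move=> a b; apply: leq_trans (leq_add b a) _; by rewrite addn1.
Qed.

Lemma nmon_Qn k : (nmon (Qn k : P) <= (n.*2.+1) * (n.*2.+1) + n.*2.+1 + 1)%N.
Proof.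
have Hs i : (nmon (ks n i ^+ 2 : P) <= (n.*2.+1) * (n.*2.+1))%N.
  rewrite expr2; apply: leq_trans (nmonM _ _) _; apply: leq_mul; exact: nmon_ks.
rewrite /Qn; case: ifP => _.
  apply: leq_trans (nmon_ksC _ _) _; lia.
case: ifP => _.
  apply: leq_trans (nmonB _ _) _.
  have := Hs k.-1; have := nmon_ks n k; lia.
have := Hs n.-1; lia.
Qed.

Lemma used_le (p : P) s : (used p s <= s)%N.
Proof. by rewrite /used; case: ifP. Qed.

Lemma used0 s : used (0 : P) s = 0%N.
Proof. by rewrite /used eqxx. Qed.

Lemma msize_bound : (sos_msize PP <= 100 * n ^ 3)%N.
Proof.
have H1 : (\sum_(r <- [seq rr i | i <- iota 0 n]) nmon r <= n * n.*2.+2)%N.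
  rewrite big_map (_ : iota 0 n = index_iota 0 n) ?subn0 //.
  apply: (@leq_trans (\sum_(0 <= i < n) n.*2.+2)%N).
    apply: leq_sum => i _; rewrite /rr; apply: leq_trans (nmonM _ _) _.
    rewrite -[X in (_ <= X)%N]mul1n; apply: leq_mul; [exact: nmonC | exact: nmon_ksC].
  by rewrite sum_nat_const_nat subn0.
have H2 : (\sum_(k < n.+1) used (tqq k) (nmon (tqq k) + nmon (Qn k : P))
   <= n.+1 * (1 + ((n.*2.+1) * (n.*2.+1) + n.*2.+1 + 1)))%N.
  apply: (@leq_trans (\sum_(k < n.+1) (1 + ((n.*2.+1) * (n.*2.+1) + n.*2.+1 + 1)))%N).
    apply: leq_sum => k _; apply: leq_trans (used_le _ _) _.
    apply: leq_add; last exact: nmon_Qn.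
    by rewrite /tqq; case: ifP => _; rewrite ?nmonN nmonC.
  by rewrite sum_nat_const card_ord.
have H3 : (\sum_(z : var n) used (0 : P) (nmon (0 : P) + nmon (bool_ax z)) = 0)%N.
  by apply: big1 => z _; rewrite used0.
have H4 : (\sum_(z : 'I_n * 'I_(n.*2)) used (0 : P) (nmon (0 : P) + nmon (twin_ax z)) = 0)%N.
  by apply: big1 => z _; rewrite used0.
apply: leq_trans (leq_add (leq_add (leq_add H1 H2) (eq_leq H3)) (eq_leq H4)) _.
rewrite !addn0; nia.
Qed.
End Main.

Theorem lemma6 :
  exists c k : nat, forall n : nat, (0 < n)%N ->
    exists P : sos_ref n,
      is_refutation P /\ sos_degree P = 2%N /\ (sos_msize P <= c * n ^ k)%N.
Proof.
exists 100%N, 3%N; case => [//|m] _.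
exists (PP m); split; [exact: refut | split; [exact: degree | exact: msize_bound]].
Qed.
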